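(* Let $\beta$ be a distortion risk measure that is neither the mean $\mathbb{E}$ nor an affine function of the mean. Then recursively applying the risk-sensitive Bellman optimality operator $\mathcal{T}^*_\beta$ with respect to $\beta$, i.e. forming $Z_{k+1}=\mathcal{T}^*_\beta Z_k$ from an arbitrary initial value distribution $Z_0$, does not (in general) solve the RSRL objective, and $\beta[Z_k]$ is not guaranteed to converge to $\beta[Z^*]$. In particular, the inequality $\|\beta[\mathcal{T}^*_\beta Z_1]-\beta[\mathcal{T}^*_\beta Z_2]\|_\infty\le\gamma\|\beta[Z_1]-\beta[Z_2]\|_\infty$ is not guaranteed to hold for all value distributions $Z_1,Z_2$.
   Context: Consider an MDP with state space $\mathcal{S}$, action space $\mathcal{A}$, deterministic transition map $M:\mathcal{S}\times\mathcal{A}\to\mathcal{S}$, reward distribution $R(s,a)$ (a real random variable for each $(s,a)$), initial state distribution $\rho_0$ and discount $\gamma\in[0,1)$. A value distribution $Z$ assigns to each $(s,a)$ a real random variable $Z(s,a)$ with bounded moments; for a policy $\pi$, $Z^\pi(s,a)=\sum_{t\ge0}\gamma^t R(s_t,a_t)$ is the random discounted return starting from $(s,a)$ and following $\pi$. A distortion risk measure $\beta$ with distortion function $h_\beta:[0,1]\to[0,1]$ (continuous, non-decreasing) is $\beta[X]=\int_{-\infty}^{\infty}x\,\frac{\partial}{\partial x}(h_\beta\circ F_X)(x)\,dx$, where $F_X$ is the CDF of $X$; the mean corresponds to $h_\beta=\mathrm{id}$. Given $Z$, let $\pi_\beta(s)\in\arg\max_{a\in\mathcal{A}}\beta[Z(s,a)]$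 (ties broken arbitrarily), and define $\mathcal{T}^*_\beta Z(s,a)$ to have the same distribution as $R(s,a)+\gamma Z(s',A')$ with $s'=M(s,a)$, $A'\sim\pi_\beta(\cdot\mid s')$. The RSRL objective is to find a policy $\pi^*_\beta\in\arg\max_\pi\mathbb{E}_{S_0\sim\rho_0,A_0\sim\pi}\big[\beta[Z^\pi(S_0,A_0)]\big]$, with $Z^*$ the return distribution of such an optimal policy. For real-valued functions $f_1,f_2$ on $\mathcal{S}\times\mathcal{A}$, $\|f_1-f_2\|_\infty=\sup_{s,a}|f_1(s,a)-f_2(s,a)|$. *)

(* Defs.v *)
From HB Require Import structures.
From mathcomp Require Import all_boot all_order all_algebra.
From mathcomp Require Import all_classical all_reals all_analysis.
Set Implicit Arguments. Unset Strict Implicit. Unset Printing Implicit Defensive.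
Import Order.TTheory GRing.Theory Num.Theory.
Import numFieldNormedType.Exports.
Local Open Scope classical_set_scope.
Local Open Scope ring_scope.

(* Finitely supported real distributions, as lists of (value, probability). *)
Section FDist.
Variable R : realType.

Definition fdist := seq (R * R).

Definition fvalid (X : fdist) : Prop :=
  (forall p, p \in X -> 0 <= p.2) /\ \sum_(p <- X) p.2 = 1.

Definition fdirac (x : R) : fdist := [:: (x, 1)].

Definition fadd (X Y : fdist) : fdist :=
  [seq (p.1 + q.1, p.2 * q.2) | p <- X, q <- Y].

Definition fscale (c : R) (X : fdist) : fdist := [seq (c * p.1, p.2) | p <- X].

Definition fmix (A : finType) (w : A -> R) (D : A -> fdist) : fdist :=
  flatten [seq [seq (p.1, w a * p.2) | p <- D a] | a <- enum A].

Definition fcdf (X : fdist) (x : R) : R := \sum_(p <- X | p.1 <= x) p.2.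
Definition fcdf_lt (X : fdist) (x : R) : R := \sum_(p <- X | p.1 < x) p.2.

Definition fmean (X : fdist) : R := \sum_(p <- X) p.1 * p.2.

(* Distortion risk measure beta[X] = int x d(h o F_X)(x).  For a finitely
   supported X, h o F_X is a step function whose only jumps are at atoms x,
   of size h(F_X(x)) - h(F_X(x-)); the Stieltjes integral is the sum below. *)
Definition distortion (h : R -> R) (X : fdist) : R :=
  \sum_(x <- undup (map fst X)) x * (h (fcdf X x) - h (fcdf_lt X x)).

Definition distortion_fun (h : R -> R) : Prop :=
  (forall u, 0 <= u <= 1 -> 0 <= h u <= 1) /\
  {within `[0, 1], continuous h} /\
  (forall u v, 0 <= u -> u <= v -> v <= 1 -> h u <= h v).

Definition affine_in_mean (h : R -> R) : Prop :=
  exists a b : R, forall X, fvalid X -> distortion h X = a * fmean X + b.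

End FDist.

Section MDP.
Variables (R : realType) (S A : finType).
Variables (M : S -> A -> S) (Rw : S -> A -> fdist R) (gamma : R).

Definition vdist := S -> A -> fdist R.

Definition vvalid (Z : vdist) : Prop := forall s a, fvalid (Z s a).

Definition greedy (h : R -> R) (Z : vdist) (pi : S -> A) : Prop :=
  forall s a, distortion h (Z s a) <= distortion h (Z s (pi s)).

(* (T*_beta Z)(s,a) =d R(s,a) + gamma Z(s', pi_beta(s')), s' = M s a,
   with R(s,a) independent of Z(s', .) *)
Definition bellman (Z : vdist) (pi : S -> A) : vdist :=
  fun s a => fadd (Rw s a) (fscale gamma (Z (M s a) (pi (M s a)))).

Fixpoint iterZ (Z0 : vdist) (pis : nat -> S -> A) (k : nat) : vdist :=
  match k with
  | 0 => Z0
  | k'.+1 => bellman (iterZ Z0 pis k') (pis k')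
  end.

Definition greedy_seq (h : R -> R) (Z0 : vdist) (pis : nat -> S -> A) : Prop :=
  forall k, greedy h (iterZ Z0 pis k) (pis k).

Definition supnorm (f : S -> A -> R) : R :=
  \big[Num.max/0]_(s : S) \big[Num.max/0]_(a : A) `|f s a|.

Definition policy := S -> A -> R.
Definition valid_policy (pi : policy) : Prop :=
  (forall s a, 0 <= pi s a) /\ (forall s, \sum_(a : A) pi s a = 1).

(* law of the n-step discounted return sum_{t<n} gamma^t R(s_t,a_t)
   from (s,a) following pi, with independent rewards *)
Fixpoint nret (pi : policy) (n : nat) (s : S) (a : A) : fdist R :=
  match n with
  | 0 => fdirac 0
  | n'.+1 => fadd (Rw s a)
               (fscale gamma (fmix (pi (M s a)) (fun a' => nret pi n' (M s a) a')))
  end.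

Fixpoint traj (s : S) (acts : nat -> A) (t : nat) : S :=
  match t with
  | 0 => s
  | t'.+1 => M (traj s acts t') (acts t')
  end.

(* after H steps all rewards are deterministically 0: the infinite-horizon
   return Z^pi then has exactly the law nret pi H *)
Definition terminating (H : nat) : Prop :=
  forall s (acts : nat -> A) t, (H <= t)%N ->
    forall p, p \in Rw (traj s acts t) (acts t) -> p.1 = 0.

(* RSRL objective  E_{S0~rho0, A0~pi} beta[Z^pi(S0,A0)],  Z^pi = nret pi H *)
Definition rsrl_obj (h : R -> R) (rho0 : S -> R) (H : nat) (pi : policy) : R :=
  \sum_(s : S) rho0 s * \sum_(a : A) pi s a * distortion h (nret pi H s a).

Definition optimal (h : R -> R) (rho0 : S -> R) (H : nat) (pi : policy) : Prop :=
  valid_policy pi /\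
  forall pi', valid_policy pi' -> rsrl_obj h rho0 H pi' <= rsrl_obj h rho0 H pi.

End MDP.

(* Main.v *)
Require Import Defs.
From HB Require Import structures.
From mathcomp Require Import all_boot all_order all_algebra.
From mathcomp Require Import all_classical all_reals all_analysis.
Import Order.TTheory GRing.Theory Num.Theory.
Import numFieldNormedType.Exports.
Local Open Scope classical_set_scope.
Local Open Scope ring_scope.
Set Implicit Arguments. Unset Strict Implicit. Unset Printing Implicit Defensive.
From mathcomp Require Import ring lra.

Section Ex.
Variable R : realType.
Implicit Types (X Y : fdist R) (f h : R -> R) (a b c x p q r : R).

Definition Ex X f := \sum_(p <- X) p.2 * f p.1.

Lemma Ex_fadd X Y f : Ex (fadd X Y) f = Ex X (fun x => Ex Y (fun y => f (x + y))).
Proof.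
rewrite /Ex /fadd big_allpairs_dep /=; apply: eq_bigr => p _.
by rewrite mulr_sumr; apply: eq_bigr => q _ /=; rewrite mulrA.
Qed.

Lemma Ex_fscale c X f : Ex (fscale c X) f = Ex X (fun x => f (c * x)).
Proof. by rewrite /Ex big_map. Qed.

Lemma Ex_fmix (A : finType) (w : A -> R) D f :
  Ex (fmix w D) f = \sum_(a : A) w a * Ex (D a) f.
Proof.
rewrite /Ex /fmix big_flatten big_map /= -big_enum /=.
apply: eq_bigr => a _; rewrite big_map mulr_sumr; apply: eq_bigr => p _ /=.
by rewrite mulrA.
Qed.

Lemma Ex_fdirac x f : Ex (fdirac x) f = f x.
Proof. by rewrite /Ex big_seq1 mul1r. Qed.

Lemma fcdfE X x : fcdf X x = Ex X (fun y => ((y <= x)%R : bool)%:R).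
Proof.
rewrite /fcdf /Ex big_mkcond; apply: eq_bigr => p _.
by case: ifP => _; rewrite ?mulr1 ?mulr0.
Qed.

Lemma fcdfltE X x : fcdf_lt X x = Ex X (fun y => ((y < x)%R : bool)%:R).
Proof.
rewrite /fcdf_lt /Ex big_mkcond; apply: eq_bigr => p _.
by case: ifP => _; rewrite ?mulr1 ?mulr0.
Qed.

Lemma Ex_lin X (A : finType) (w : A -> R) (g : A -> R -> R) :
  Ex X (fun x => \sum_(a : A) w a * g a x) = \sum_(a : A) w a * Ex X (g a).
Proof.
rewrite /Ex; under eq_bigr do rewrite mulr_sumr.
rewrite exchange_big /=; apply: eq_bigr => a _; rewrite mulr_sumr.
by apply: eq_bigr => p _; rewrite mulrCA.
Qed.

Lemma Ex_ext X f g : {in map fst X, f =1 g} -> Ex X f = Ex X g.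
Proof.
move=> fg; rewrite /Ex big_seq_cond [RHS]big_seq_cond; apply: eq_bigr => p /andP[pX _].
by rewrite fg // map_f.
Qed.

Lemma fcdf_eq_lt X x : x \notin map fst X -> fcdf X x = fcdf_lt X x.
Proof.
move=> xX; rewrite fcdfE fcdfltE; apply: Ex_ext => y yX.
have : y != x by apply: contraNneq xX => <-.
by rewrite lt_neqAle => ->.
Qed.

Lemma sum_extend (T s : seq R) (F : R -> R) : uniq s -> uniq T -> {subset s <= T} ->
  (forall x, x \in T -> x \notin s -> F x = 0) ->
  \sum_(x <- s) F x = \sum_(x <- T) F x.
Proof.
move=> us uT sT F0.
rewrite [RHS](bigID (fun x => x \in s)) /= [X in _ = _ + X]big1_seq ?addr0; last first.
  by move=> x /andP[xs xT]; exact: F0.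
rewrite -[RHS]big_filter; apply: perm_big; apply: uniq_perm => //; first exact: filter_uniq.
move=> x; rewrite mem_filter /=; case xs: (x \in s) => //=; by rewrite sT.
Qed.

Lemma distortion_ext h X T : uniq T -> {subset map fst X <= T} ->
  distortion h X = \sum_(x <- T) x * (h (fcdf X x) - h (fcdf_lt X x)).
Proof.
move=> uT XT; rewrite /distortion; apply: sum_extend => //.
- exact: undup_uniq.
- by move=> x; rewrite mem_undup; exact: XT.
- by move=> x _; rewrite mem_undup => xn; rewrite fcdf_eq_lt // subrr mulr0.
Qed.

Lemma distortion_Ex h X Y : (forall f, Ex X f = Ex Y f) ->
  distortion h X = distortion h Y.
Proof.
move=> XY.
have uT := undup_uniq (map fst X ++ map fst Y).
rewrite (distortion_ext h (X:=X) uT); last by move=> x xX; rewrite mem_undup mem_cat xX.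
rewrite (distortion_ext h (X:=Y) uT); last by move=> x xX; rewrite mem_undup mem_cat xX orbT.
by apply: eq_bigr => x _; rewrite !fcdfE !fcdfltE !XY.
Qed.

Lemma distortion1 h x p : distortion h [:: (x, p)] = x * (h p - h 0).
Proof.
by rewrite /distortion /= big_seq1 /fcdf /fcdf_lt !big_cons !big_nil /= lexx ltxx addr0.
Qed.

Lemma distortion2 h a b p q : a < b ->
  distortion h [:: (a, p); (b, q)] = a * (h p - h 0) + b * (h (p + q) - h p).
Proof.
move=> ab.
rewrite /distortion /= inE (lt_eqF ab) /= !big_cons big_nil /fcdf /fcdf_lt.
rewrite !big_cons !big_nil /= !lexx !ltxx (ltW ab) ab (lt_geF ab) (lt_gtF ab).
by rewrite !addr0.
Qed.

Lemma distortion3 h a b c p q r : a < b -> b < c ->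
  distortion h [:: (a, p); (b, q); (c, r)] =
  a * (h p - h 0) + b * (h (p + q) - h p) + c * (h (p + q + r) - h (p + q)).
Proof.
move=> ab bc; have ac := lt_trans ab bc.
rewrite /distortion /= !inE (lt_eqF ab) (lt_eqF ac) (lt_eqF bc) /=.
rewrite !big_cons big_nil /fcdf /fcdf_lt.
rewrite !big_cons !big_nil /= !lexx !ltxx (ltW ab) (ltW ac) (ltW bc) ab ac bc.
rewrite (lt_geF ab) (lt_gtF ab) (lt_geF ac) (lt_gtF ac) (lt_geF bc) (lt_gtF bc).
by rewrite !addr0 !addrA.
Qed.

End Ex.


Section Conc.
Variable R : realType.
Implicit Types (X Y : fdist R) (f h : R -> R) (a b c x u : R).

Definition gam : R := 2^-1.
Definition R0 u : fdist R := [:: (0, u); (1, 1 - u)].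
Definition Yd u : fdist R := [:: (0, u); (2, 1 - u)].

Lemma gam2 : gam * 2 = 1.
Proof. by rewrite /gam mulVf // pnatr_eq0. Qed.

Lemma beta_R0 h u : distortion h (R0 u) = h 1 - h u.
Proof. rewrite distortion2 ?ltr01 //; have -> : u + (1 - u) = 1 by ring. ring. Qed.

Lemma beta_Yd h u : distortion h (Yd u) = 2 * (h 1 - h u).
Proof. rewrite distortion2 ?ltr0n //; have -> : u + (1 - u) = 1 by ring. ring. Qed.

Lemma beta_dirac h x : distortion h (fdirac x) = x * (h 1 - h 0).
Proof. exact: distortion1. Qed.

Lemma beta_R0Y h u : distortion h (fadd (R0 u) (fscale gam (Yd u))) =
  2 * h 1 - h (u * u) - h (u * u + 2 * u * (1 - u)).
Proof.
rewrite (@distortion_Ex _ _ _ [:: (0, u * u); (1, 2 * u * (1 - u)); (2, (1 - u) * (1 - u))]).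
  rewrite distortion3 ?ltr01 ?ltr1n //.
  have -> : u * u + 2 * u * (1 - u) + (1 - u) * (1 - u) = 1 by ring.
  ring.
move=> f; rewrite /Ex /fadd /fscale /= !big_cons !big_nil /=.
rewrite !mulr0 !addr0 add0r gam2.
have -> : (1 + 1 : R) = 2 by [].
ring.
Qed.

Lemma beta_R0d h u x : distortion h (fadd (R0 u) (fscale gam (fdirac x))) =
  gam * x * (h 1 - h 0) + (h 1 - h u).
Proof.
rewrite (@distortion_Ex _ _ _ [:: (gam * x, u); (1 + gam * x, 1 - u)]).
  rewrite distortion2; last by rewrite ltrDr ltr01.
  have -> : u + (1 - u) = 1 by ring.
  ring.
move=> f; rewrite /Ex /fadd /fscale /= !big_cons !big_nil /=.
rewrite add0r; ring.
Qed.

Lemma valid_R0 u : 0 <= u <= 1 -> fvalid (R0 u).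
Proof.
move=> /andP[u0 u1]; split.
  by move=> p; rewrite !inE => /orP[] /eqP -> //=; rewrite subr_ge0.
by rewrite !big_cons big_nil /=; ring.
Qed.

Lemma valid_Yd u : 0 <= u <= 1 -> fvalid (Yd u).
Proof.
move=> /andP[u0 u1]; split.
  by move=> p; rewrite !inE => /orP[] /eqP -> //=; rewrite subr_ge0.
by rewrite !big_cons big_nil /=; ring.
Qed.

Lemma valid_dirac x : fvalid (fdirac x).
Proof.
split; first by move=> p; rewrite inE => /eqP -> /=.
by rewrite big_seq1.
Qed.

Lemma sum_cond_01 X (P : pred R) : fvalid X ->
  0 <= \sum_(p <- X | P p.1) p.2 <= 1.
Proof.
move=> [X0 X1]; apply/andP; split.
  by rewrite big_seq_cond; apply: sumr_ge0 => p /andP[pX _]; exact: X0.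
rewrite -X1 [X in _ <= X](bigID (fun p => P p.1)) /= lerDl.
by rewrite big_seq_cond; apply: sumr_ge0 => p /andP[pX _]; exact: X0.
Qed.

Lemma fcdf_01 X x : fvalid X -> 0 <= fcdf X x <= 1.
Proof. exact: (sum_cond_01 (fun y => y <= x)). Qed.

Lemma fcdflt_01 X x : fvalid X -> 0 <= fcdf_lt X x <= 1.
Proof. exact: (sum_cond_01 (fun y => y < x)). Qed.

Lemma sum_pred1_seq (s : seq R) i (F : R -> R) : uniq s -> i \in s ->
  \sum_(j <- s | j == i) F j = F i.
Proof.
move=> us iS; rewrite big_mkcond (bigD1_seq i) //= eqxx big1 ?addr0 //.
by move=> j /negbTE ->.
Qed.

Lemma fcdf_diff X x : fcdf X x - fcdf_lt X x = \sum_(p <- X | p.1 == x) p.2.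
Proof.
rewrite /fcdf /fcdf_lt (bigID (fun p => p.1 < x)) /=.
have E1 a : (a <= x) && (a < x) = (a < x) by case: ltgtP.
have E2 a : (a <= x) && ~~ (a < x) = (a == x) by case: ltgtP.
under eq_bigl do rewrite E1.
rewrite [X in _ + X - _](eq_bigl (fun p => p.1 == x)); last by move=> p; exact: E2.
by rewrite addrC addKr.
Qed.

Lemma affine_h_mean h : (forall v, 0 <= v <= 1 -> h v = h 0 + (h 1 - h 0) * v) ->
  affine_in_mean h.
Proof.
move=> hA; exists (h 1 - h 0), 0 => X vX; rewrite addr0 /distortion /fmean.
have key x : x * (h (fcdf X x) - h (fcdf_lt X x)) =
    (h 1 - h 0) * \sum_(p <- X | p.1 == x) p.1 * p.2.
  rewrite (hA (fcdf X x)) ?fcdf_01 // (hA (fcdf_lt X x)) ?fcdflt_01 //.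
  have -> : h 0 + (h 1 - h 0) * fcdf X x - (h 0 + (h 1 - h 0) * fcdf_lt X x) =
    (h 1 - h 0) * (fcdf X x - fcdf_lt X x) by ring.
  rewrite fcdf_diff mulrCA; congr (_ * _); rewrite mulr_sumr.
  by apply: eq_bigr => p /eqP ->.
under eq_bigr do rewrite key.
rewrite -mulr_sumr; congr (_ * _).
under eq_bigr do rewrite big_mkcond.
rewrite exchange_big /= big_seq [RHS]big_seq; apply: eq_bigr => p pX.
rewrite -big_mkcond /=.
under eq_bigl do rewrite eq_sym.
by apply: sum_pred1_seq; rewrite ?undup_uniq // mem_undup map_f.
Qed.
End Conc.


Section NonAff.
Variable R : realType.

Definition Eh (h : R -> R) (u : R) := 2 * h u - h (u * u) - h (u * u + 2 * u * (1 - u)).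

Lemma sq_01 (v : R) : 0 <= v <= 1 -> 0 <= v * v <= 1.
Proof. move=> /andP[v0 v1]; apply/andP; split; nra. Qed.

Lemma b_01 (v : R) : 0 <= v <= 1 -> 0 <= v * v + 2 * v * (1 - v) <= 1.
Proof. move=> /andP[v0 v1]; apply/andP; split; nra. Qed.

Lemma max_lemma (g : R -> R) : {within `[0, 1], continuous g} -> g 0 = 0 -> g 1 = 0 ->
  (forall u, 0 < u < 1 -> 2 * g u = g (u * u) + g (u * u + 2 * u * (1 - u))) ->
  forall w, 0 <= w <= 1 -> g w <= 0.
Proof.
move=> cg g0 g1 Hg w w01; rewrite leNgt; apply/negP => gw.
have [m m01 mmax] := EVT_max ler01 cg.
have inI (v : R) : 0 <= v <= 1 -> v \in `[0, 1]%R by move=> v01; rewrite in_itv.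
have Mpos : 0 < g m by apply: (lt_le_trans gw); apply: mmax; exact: inI.
move: m01; rewrite in_itv /= => /andP[m0 m1].
have m0' : 0 < m by rewrite lt_neqAle m0 andbT; apply/eqP => em; move: Mpos; rewrite -em g0 ltxx.
have m1' : m < 1 by rewrite lt_neqAle m1 andbT; apply/eqP => em; move: Mpos; rewrite em g1 ltxx.
have iter n : g (m ^+ (2 ^ n)) = g m.
  elim: n => [|n IH]; first by rewrite expn0 expr1.
  set v := m ^+ (2 ^ n) in IH.
  have v0 : 0 < v by rewrite exprn_gt0.
  have v1 : v < 1 by rewrite exprn_ilt1 ?(ltW m0') // expn_eq0.
  have v01 : 0 <= v <= 1 by rewrite !ltW.
  have := Hg v; rewrite v0 v1 => /(_ isT).
  have le1 := mmax _ (inI _ (sq_01 v01)).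
  have le2 := mmax _ (inI _ (b_01 v01)).
  rewrite expnSr exprM expr2 -/v IH => eq2.
  lra.
have /subspace_continuousP /(_ 0) := cg.
rewrite /= in_itv /= lexx ler01 => /(_ isT).
move=> /cvgrPdist_lt /(_ _ Mpos).
rewrite /within /= => /nbhs_normP [e e0 He].
have mn : `|m| < 1 by rewrite ger0_norm.
move: (cvg_expr mn) => /cvgrPdist_lt /(_ _ e0) [N _ HN].
have := HN N (leqnn N); rewrite /= sub0r normrN => mN.
have mN0 : 0 <= m ^+ N by rewrite exprn_ge0.
have m2N : m ^+ (2 ^ N) <= m ^+ N.
  by apply: ler_wiXn2l => //; apply: ltnW; apply: ltn_expl.
have m2N0 : 0 <= m ^+ (2 ^ N) by rewrite exprn_ge0.
have m2N1 : m ^+ (2 ^ N) <= 1 by rewrite exprn_ile1.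
have := He (m ^+ (2 ^ N)).
rewrite /= sub0r normrN ger0_norm // (le_lt_trans m2N) ?(ger0_norm mN0) //.
rewrite inI ?m2N0 ?m2N1 // => /(_ isT isT).
rewrite /from_subspace /= g0 iter sub0r normrN gtr0_norm // ltxx //.
by rewrite -(ger0_norm mN0).
Qed.

Lemma exists_E h : distortion_fun h -> ~ affine_in_mean h ->
  exists u, 0 < u < 1 /\ Eh h u != 0.
Proof.
move=> [hr [hc hm]] na.
have [//|nE] := pselect (exists u, 0 < u < 1 /\ Eh h u != 0).
exfalso; apply: na; apply: affine_h_mean => v v01.
have E0 u : 0 < u < 1 -> Eh h u = 0.
  move=> u01; apply/eqP; apply/negPn/negP => Eu; apply: nE; by exists u.
pose g v := h v - (h 0 + (h 1 - h 0) * v).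
have cg : {within `[0, 1], continuous g}.
  apply: within_continuousB => //; apply: continuous_subspaceT => x.
  apply: cvgD; first exact: cvg_cst.
  by apply: cvgM; [exact: cvg_cst | exact: cvg_id].
have g0 : g 0 = 0 by rewrite /g mulr0 addr0 subrr.
have g1 : g 1 = 0 by rewrite /g; ring.
have gE u : 0 < u < 1 -> 2 * g u = g (u * u) + g (u * u + 2 * u * (1 - u)).
  move=> u01; apply/eqP; rewrite -subr_eq0; apply/eqP.
  rewrite -(E0 u u01) /Eh /g; ring.
have le1 := max_lemma cg g0 g1 gE v01.
have cg' : {within `[0, 1], continuous (fun v => - g v)}.
  by move=> x; apply: cvgN; exact: cg.
have le2 := @max_lemma (fun v => - g v) cg'.
have le2' : - g v <= 0.
  apply: (le2 _ _ _ v v01); first by rewrite g0 oppr0.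
    by rewrite g1 oppr0.
  move=> u u01 /=; have := gE u u01; lra.
move: le1 le2'; rewrite /g; lra.
Qed.

End NonAff.


Section Part2.
Variable R : realType.

Lemma bigmax_ge (I : eqType) (r : seq I) (F : I -> R) i : i \in r ->
  F i <= \big[Num.max/0]_(j <- r) F j.
Proof.
elim: r => // j r IH; rewrite inE big_cons => /orP[/eqP <-|/IH].
  by rewrite le_max lexx.
by rewrite le_max => ->; rewrite orbT.
Qed.

Lemma bigmax_0 (I : eqType) (r : seq I) (F : I -> R) : (forall i, F i = 0) ->
  \big[Num.max/0]_(j <- r) F j = 0.
Proof.
move=> F0; elim: r => [|j r IH]; first by rewrite big_nil.
by rewrite big_cons IH F0 maxxx.
Qed.

Lemma supnorm_ge (S A : finType) (f : S -> A -> R) s a : `|f s a| <= supnorm f.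
Proof.
rewrite /supnorm; apply: le_trans (bigmax_ge _ (mem_index_enum s)).
exact: (bigmax_ge (fun a => `|f s a|) (mem_index_enum a)).
Qed.

Lemma supnorm0 (S A : finType) (f : S -> A -> R) : (forall s a, f s a = 0) -> supnorm f = 0.
Proof.
move=> f0; rewrite /supnorm; apply: bigmax_0 => s; apply: bigmax_0 => a.
by rewrite f0 normr0.
Qed.

Lemma gam01 : 0 <= gam R < 1.
Proof. rewrite /gam; apply/andP; split; lra. Qed.

Lemma part2 (h : R -> R) u x : 0 <= u <= 1 -> x * (h 1 - h 0) = 2 * (h 1 - h u) ->
  Eh h u != 0 ->
  (exists (S A : finType) (M : S -> A -> S) (Rw : S -> A -> fdist R)
          (gamma : R) (Z1 Z2 : vdist R S A),
      (0 < #|A|)%N /\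
      (forall s a, fvalid (Rw s a)) /\
      0 <= gamma < 1 /\
      vvalid Z1 /\ vvalid Z2 /\
      (forall pi1 pi2, greedy h Z1 pi1 -> greedy h Z2 pi2 ->
         ~ (supnorm (fun s a => distortion h (bellman M Rw gamma Z1 pi1 s a)
                              - distortion h (bellman M Rw gamma Z2 pi2 s a))
            <= gamma * supnorm (fun s a => distortion h (Z1 s a)
                                         - distortion h (Z2 s a))))).
Proof.
move=> u01 Hx Eu.
exists unit; exists unit; exists (fun _ _ => tt); exists (fun _ _ => R0 u).
exists (gam R); exists (fun _ _ => Yd u); exists (fun _ _ => fdirac x).
split; first by rewrite card_unit.
split; first by move=> _ _; exact: valid_R0.
split; first exact: gam01.
split; first by move=> _ _; exact: valid_Yd.
split; first by move=> _ _; exact: valid_dirac.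
move=> pi1 pi2 _ _.
rewrite [X in _ <= _ * X]supnorm0; last by move=> s a /=; rewrite beta_Yd beta_dirac Hx subrr.
rewrite mulr0.
have := supnorm_ge (fun s a => distortion h (bellman (fun _ _ => tt) (fun _ _ => R0 u) (gam R)
  (fun _ _ => Yd u) pi1 s a) - distortion h (bellman (fun _ _ => tt) (fun _ _ => R0 u) (gam R)
  (fun _ _ => fdirac x) pi2 s a)) tt tt.
have gx : gam R * x * (h 1 - h 0) = h 1 - h u.
  by rewrite -mulrA Hx mulrA gam2 mul1r.
rewrite /bellman /= beta_R0Y beta_R0d gx.
move=> H HS; have := le_trans H HS; rewrite normr_le0 => /eqP e.
by move/eqP: Eu; apply; rewrite /Eh; lra.
Qed.
End Part2.


Section Part1.
Variable R : realType.
Variable h : R -> R.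
Variable u : R.
Variable X : bool -> fdist R.

Definition Mt (s : option bool) (a : bool) : option bool :=
  if s is None then Some true else Some false.
Definition Rwt (s : option bool) (a : bool) : fdist R :=
  match s with None => R0 u | Some true => X a | Some false => fdirac 0 end.
Definition rho0t (s : option bool) : R := if s is None then 1 else 0.
Definition Z0t : vdist R (option bool) bool := fun _ _ => fdirac 0.

Definition Yb (b : bool) := fadd (R0 u) (fscale (gam R) (X b)).
Definition Mx (l : R) : fdist R :=
  [seq (p.1, l * p.2) | p <- Yb true] ++ [seq (p.1, (1 - l) * p.2) | p <- Yb false].
Definition G l := distortion h (Mx l).

Lemma Ex_Mx l f : Ex (Mx l) f = l * Ex (Yb true) f + (1 - l) * Ex (Yb false) f.
Proof.
rewrite /Ex /Mx big_cat !big_map !mulr_sumr /=.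
by congr (_ + _); apply: eq_bigr => p _; rewrite mulrA.
Qed.

Lemma G1 : G 1 = distortion h (Yb true).
Proof. by apply: distortion_Ex => f; rewrite Ex_Mx subrr mul0r addr0 mul1r. Qed.

Lemma G0 : G 0 = distortion h (Yb false).
Proof. by apply: distortion_Ex => f; rewrite Ex_Mx subr0 mul0r add0r mul1r. Qed.

Lemma Ex_zero (w : bool -> R) (phi : R -> R) x : w true + w false = 1 ->
  Ex (fscale (gam R) (fmix w (fun _ => fdirac 0))) (fun z => phi (x + z)) = phi x.
Proof.
move=> w1; rewrite Ex_fscale Ex_fmix big_bool /= !Ex_fdirac mulr0 addr0.
by rewrite -mulrDl w1 mul1r.
Qed.

Lemma sum_bool_valid (pi : policy R (option bool) bool) s : valid_policy pi ->
  pi s true + pi s false = 1.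
Proof. by move=> [_ p1]; rewrite -(p1 s) big_bool. Qed.

Lemma Ex_lin2 (Y : fdist R) a b f g :
  a * Ex Y f + b * Ex Y g = Ex Y (fun x => a * f x + b * g x).
Proof.
rewrite /Ex !mulr_sumr -big_split /=; apply: eq_bigr => p _; ring.
Qed.

Lemma Ex_eq (Y : fdist R) f g : (forall x, f x = g x) -> Ex Y f = Ex Y g.
Proof. by move=> fg; rewrite /Ex; apply: eq_bigr => p _; rewrite fg. Qed.

Lemma obj_eq (pi : policy R (option bool) bool) a : valid_policy pi ->
  distortion h (nret Mt Rwt (gam R) pi 2 None a) = G (pi (Some true) true).
Proof.
move=> vp; apply: distortion_Ex => f /=.
rewrite Ex_Mx /Yb !Ex_fadd Ex_lin2; apply: Ex_eq => r.
rewrite Ex_fscale Ex_fmix big_bool /= !Ex_fadd !Ex_fscale.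
have e1 b : Ex (X b) (fun x => Ex (fscale (gam R) (fmix (pi (Some false)) (fun _ => fdirac 0)))
    (fun y => f (r + gam R * (x + y)))) = Ex (X b) (fun x => f (r + gam R * x)).
  apply: Ex_eq => x.
  rewrite (Ex_zero (fun z => f (r + gam R * z))) //; exact: sum_bool_valid.
rewrite e1 e1.
have -> : pi (Some true) false = 1 - pi (Some true) true.
  by move: (sum_bool_valid (Some true) vp); lra.
by [].
Qed.


Lemma obj_rsrl (pi : policy R (option bool) bool) : valid_policy pi ->
  rsrl_obj Mt Rwt (gam R) h rho0t 2 pi = G (pi (Some true) true).
Proof.
move=> vp; rewrite /rsrl_obj (bigD1 None) //= [X in _ + X]big1 => [|s sN]; last first.
  by case: s sN => [[]|] // _; rewrite /rho0t mul0r.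
rewrite addr0 mul1r.
under eq_bigr do rewrite obj_eq //.
by rewrite -mulr_suml (proj2 vp) mul1r.
Qed.

Lemma cont_comp_aff a b : {within `[0, 1], continuous h} -> 0 <= a <= 1 -> 0 <= b <= 1 ->
  {within `[0, 1], continuous (fun l => h (l * a + (1 - l) * b))}.
Proof.
move=> hc /andP[a0 a1] /andP[b0 b1].
pose phi := fun l : R => l * a + (1 - l) * b.
have cphi : continuous phi.
  move=> l; apply: cvgD; apply: cvgM.
  - exact: cvg_id.
  - exact: cvg_cst.
  - by apply: cvgB; [exact: cvg_cst|exact: cvg_id].
  - exact: cvg_cst.
have phiI l : l \in `[0, 1]%R -> phi l \in `[0, 1]%R.
  rewrite !in_itv /= => /andP[l0 l1]; apply/andP; split; rewrite /phi; nra.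
apply/subspace_continuousP => l Il.
have hc' := (subspace_continuousP _ h).1 hc (phi l) (phiI l Il).
apply: (cvg_comp phi h _ hc').
move=> P /= HP.
have := cphi l _ HP; rewrite /= nbhs_simpl => H.
have H' : nbhs l (fun t => phi t \in `[0, 1]%R -> P (phi t)) := H.
rewrite /within /= nbhs_simpl /=; move: H'; apply: filterS => t Ht It; apply: Ht; exact: phiI.
Qed.


Definition trm (F1 F2 F1' F2' : R -> R) (l x : R) :=
  x * (h (l * F1 x + (1 - l) * F2 x) - h (l * F1' x + (1 - l) * F2' x)).

Lemma cont_sum (T : seq R) (F1 F2 F1' F2' : R -> R) :
  {within `[0, 1], continuous h} ->
  (forall x, 0 <= F1 x <= 1) -> (forall x, 0 <= F2 x <= 1) ->
  (forall x, 0 <= F1' x <= 1) -> (forall x, 0 <= F2' x <= 1) ->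
  {within `[0, 1], continuous (fun l => \sum_(x <- T) trm F1 F2 F1' F2' l x)}.
Proof.
move=> hc H1 H2 H1' H2'; elim: T => [|x T IH].
  apply: (subspace_eq_continuous (f := fun _ => 0)).
    by move=> l _ /=; rewrite /from_subspace big_nil.
  by move=> l; exact: cvg_cst.
have -> : (fun l => \sum_(y <- x :: T) trm F1 F2 F1' F2' l y) =
    (fun l => trm F1 F2 F1' F2' l x + \sum_(y <- T) trm F1 F2 F1' F2' l y).
  by apply/funext => l; rewrite big_cons.
move=> l; apply: cvgD; last exact: IH.
apply: cvgM; first exact: cvg_cst.
by apply: cvgB; [exact: (cont_comp_aff hc (H1 x) (H2 x)) | exact: (cont_comp_aff hc (H1' x) (H2' x))].
Qed.


Lemma sum_Ex (Y : fdist R) : \sum_(p <- Y) p.2 = Ex Y (fun _ => 1).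
Proof. by rewrite /Ex; apply: eq_bigr => p _; rewrite mulr1. Qed.

Lemma valid_fadd (Y1 Y2 : fdist R) : fvalid Y1 -> fvalid Y2 -> fvalid (fadd Y1 Y2).
Proof.
move=> [p1 s1] [p2 s2]; split.
  move=> p /allpairsP [[q1 q2] [/= q1Y q2Y ->]] /=.
  by rewrite mulr_ge0 //; [exact: p1 | exact: p2].
rewrite sum_Ex Ex_fadd -[RHS]s1 sum_Ex; apply: Ex_eq => x.
by rewrite -sum_Ex s2.
Qed.

Lemma valid_fscale c (Y : fdist R) : fvalid Y -> fvalid (fscale c Y).
Proof.
move=> [p1 s1]; split.
  by move=> p /mapP [q qY ->] /=; exact: p1.
by rewrite big_map.
Qed.

Lemma G_expand l : G l = \sum_(x <- undup (map fst (Yb true) ++ map fst (Yb false)))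
  trm (fcdf (Yb true)) (fcdf (Yb false)) (fcdf_lt (Yb true)) (fcdf_lt (Yb false)) l x.
Proof.
rewrite /G /distortion.
have -> : map fst (Mx l) = map fst (Yb true) ++ map fst (Yb false).
  by rewrite /Mx map_cat -!map_comp.
apply: eq_bigr => x _; rewrite /trm.
by rewrite !fcdfE !fcdfltE !Ex_Mx.
Qed.

Lemma G_cont : {within `[0, 1], continuous h} -> 0 <= u <= 1 ->
  (forall b, fvalid (X b)) -> {within `[0, 1], continuous G}.
Proof.
move=> hc u01 vX.
have vY b : fvalid (Yb b) by apply: valid_fadd; [exact: valid_R0 | exact: valid_fscale].
have -> : G = (fun l => \sum_(x <- undup (map fst (Yb true) ++ map fst (Yb false)))
  trm (fcdf (Yb true)) (fcdf (Yb false)) (fcdf_lt (Yb true)) (fcdf_lt (Yb false)) l x).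
  by apply/funext => l; rewrite G_expand.
by apply: cont_sum => // x; rewrite ?fcdf_01 ?fcdflt_01.
Qed.

Lemma iter_s2 pis k c f : Ex (iterZ Mt Rwt (gam R) Z0t pis k (Some false) c) f = f 0.
Proof.
elim: k c f => [|k IH] c f /=; first by rewrite /Z0t Ex_fdirac.
by rewrite /bellman /= Ex_fadd Ex_fdirac Ex_fscale IH mulr0 !addr0.
Qed.

Lemma iter_s1 pis k b f : Ex (iterZ Mt Rwt (gam R) Z0t pis k.+1 (Some true) b) f = Ex (X b) f.
Proof.
rewrite /= /bellman /= Ex_fadd; apply: Ex_eq => x.
by rewrite Ex_fscale iter_s2 mulr0 addr0.
Qed.

Lemma iter_s0 pis k a f : Ex (iterZ Mt Rwt (gam R) Z0t pis k.+2 None a) f =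
  Ex (Yb (pis k.+1 (Some true))) f.
Proof.
rewrite [iterZ _ _ _ _ _ k.+2]/= /bellman /= /Yb !Ex_fadd; apply: Ex_eq => r.
by rewrite !Ex_fscale iter_s1.
Qed.

End Part1.


Section Part1b.
Variable R : realType.

Lemma part1 (h : R -> R) (u : R) (X : bool -> fdist R) :
  distortion_fun h -> 0 <= u <= 1 -> (forall b, fvalid (X b)) ->
  distortion h (X true) < distortion h (X false) ->
  distortion h (Yb u X false) < distortion h (Yb u X true) ->
  (exists (S A : finType) (M : S -> A -> S) (Rw : S -> A -> fdist R)
          (rho0 : S -> R) (gamma : R) (H : nat) (Z0 : vdist R S A),
      (0 < #|A|)%N /\
      (forall s a, fvalid (Rw s a)) /\
      (forall s, 0 <= rho0 s) /\ \sum_(s : S) rho0 s = 1 /\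
      0 <= gamma < 1 /\
      terminating M Rw H /\
      vvalid Z0 /\
      (exists pistar, optimal M Rw gamma h rho0 H pistar) /\
      (forall pistar, optimal M Rw gamma h rho0 H pistar ->
       forall pis, greedy_seq M Rw gamma h Z0 pis ->
       exists s a,
         ~ ((fun k => distortion h (iterZ M Rw gamma Z0 pis k s a)) @ \oo
              --> distortion h (nret M Rw gamma pistar H s a)))).
Proof.
move=> hd u01 vX hX hY.
have [hr [hc hm]] := hd.
exists (option bool); exists bool; exists Mt; exists (Rwt u X); exists (@rho0t R).
exists (gam R); exists 2%N; exists (@Z0t R).
split; first by rewrite card_bool.
split; first by move=> [[]|] a /=; [exact: vX | exact: valid_dirac | exact: valid_R0].
split; first by move=> [s|] /=; rewrite ?ler01 ?lexx.
split; first by rewrite (bigD1 None) //= big1 ?addr0 // => -[s|].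
split; first exact: gam01.
split.
  move=> s acts [|[|t]] // _ p.
  have -> : traj Mt s acts t.+2 = Some false by rewrite /= /Mt; case: (traj Mt s acts t).
  by rewrite /= inE => /eqP ->.
split; first by move=> s a; exact: valid_dirac.
have Gc := G_cont hc u01 vX.
have [ls ls01 lsmax] := EVT_max ler01 Gc.
move: ls01; rewrite in_itv /= => /andP[ls0 ls1].
pose pistar : policy R (option bool) bool := fun s a =>
  if s is Some true then (if a then ls else 1 - ls) else (if a then 1 else 0).
have vps : valid_policy pistar.
  split; first by move=> [[]|] [] /=; rewrite ?subr_ge0 ?ler01 ?lexx.
  by move=> [[]|]; rewrite big_bool /= ?addr0 // addrC subrK.
pose pure : policy R (option bool) bool := fun s a => if a then 1 else 0.
have vpure : valid_policy pure.
  split; first by move=> s [] /=; rewrite ?ler01 ?lexx.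
  by move=> s; rewrite big_bool /= addr0.
have optps : optimal Mt (Rwt u X) (gam R) h (rho0t R) 2 pistar.
  split => // pi' vp'; rewrite !obj_rsrl //=.
  apply: lsmax; rewrite in_itv /=.
  have := proj1 vp' (Some true) true; have := proj1 vp' (Some true) false.
  have := sum_bool_valid (Some true) vp'; move=> *; apply/andP; split; lra.
split; first by exists pistar.
move=> ps [vps' optps'] pis gs.
exists None, true => conv.
have L1 : G h u X 1 <= distortion h (nret Mt (Rwt u X) (gam R) ps 2 None true).
  rewrite (obj_eq _ _ _ _ vps'); have := optps' pure vpure; rewrite !obj_rsrl //.
rewrite G1 in L1.
have seqc : (fun k => distortion h (iterZ Mt (Rwt u X) (gam R) (Z0t R) pis k None true))
    @ \oo --> distortion h (Yb u X false).
  apply: cvg_near_cst; exists 2%N => // k /= k2.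
  case: k k2 => [|[|k]] // _.
  have ds1 b : distortion h (iterZ Mt (Rwt u X) (gam R) (Z0t R) pis k.+1 (Some true) b) =
      distortion h (X b) by apply: distortion_Ex => f; exact: iter_s1.
  have pf : pis k.+1 (Some true) = false.
    have := gs k.+1 (Some true) false; rewrite !ds1.
    by case: (pis k.+1 (Some true)) => // le; rewrite ltNge le in hX.
  by apply: distortion_Ex => f; rewrite iter_s0 pf.
have E := cvg_unique (@Rhausdorff R) conv seqc.
by move: L1; rewrite E leNgt hY.
Qed.
End Part1b.

Unset Implicit Arguments. Set Strict Implicit.

Theorem mainTheorem1 (R : realType) (h : R -> R) :
  distortion_fun h -> ~ affine_in_mean h ->
  (* (i) iterating T*_beta does not in general reach beta[Z*] *)
  (exists (S A : finType) (M : S -> A -> S) (Rw : S -> A -> fdist R)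
          (rho0 : S -> R) (gamma : R) (H : nat) (Z0 : vdist R S A),
      (0 < #|A|)%N /\
      (forall s a, fvalid (Rw s a)) /\
      (forall s, 0 <= rho0 s) /\ \sum_(s : S) rho0 s = 1 /\
      0 <= gamma < 1 /\
      terminating M Rw H /\
      vvalid Z0 /\
      (exists pistar, optimal M Rw gamma h rho0 H pistar) /\
      (forall pistar, optimal M Rw gamma h rho0 H pistar ->
       forall pis, greedy_seq M Rw gamma h Z0 pis ->
       exists s a,
         ~ ((fun k => distortion h (iterZ M Rw gamma Z0 pis k s a)) @ \oo
              --> distortion h (nret M Rw gamma pistar H s a)))) /\
  (* (ii) the gamma-contraction inequality in beta fails for some Z1, Z2 *)
  (exists (S A : finType) (M : S -> A -> S) (Rw : S -> A -> fdist R)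
          (gamma : R) (Z1 Z2 : vdist R S A),
      (0 < #|A|)%N /\
      (forall s a, fvalid (Rw s a)) /\
      0 <= gamma < 1 /\
      vvalid Z1 /\ vvalid Z2 /\
      (forall pi1 pi2, greedy h Z1 pi1 -> greedy h Z2 pi2 ->
         ~ (supnorm (fun s a => distortion h (bellman M Rw gamma Z1 pi1 s a)
                              - distortion h (bellman M Rw gamma Z2 pi2 s a))
            <= gamma * supnorm (fun s a => distortion h (Z1 s a)
                                         - distortion h (Z2 s a))))).
Proof.
move=> hd na.
have [u [/andP[u0 u1] Eu]] := exists_E hd na.
have u01 : 0 <= u <= 1 by rewrite !ltW.
have [hr [hc hm]] := hd.
set c := h 1 - h 0.
have c0 : 0 < c.
  have c0' : 0 <= c by rewrite subr_ge0; apply: hm; rewrite ?ler01 ?lexx.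
  rewrite lt_neqAle c0' andbT; apply/negP => /eqP c00.
  have hconst v : 0 <= v <= 1 -> h v = h 0.
    move=> /andP[v0 v1]; have := hm 0 v (lexx 0) v0 v1.
    have := hm v 1 v0 v1 (lexx 1); rewrite /c in c00; lra.
  move/eqP: Eu; apply.
  by rewrite /Eh (hconst u u01) (hconst _ (sq_01 u01)) (hconst _ (b_01 u01)); ring.
set K := 2 * (h 1 - h u).
have cn0 : c != 0 by rewrite gt_eqF.
split; last first.
  apply: (@part2 R h u (K / c) u01) => //.
  by rewrite -/c mulrAC -mulrA divff // mulr1.
have vYd := valid_Yd u01.
have gx x : gam R * x * (h 1 - h 0) = gam R * (x * c) by rewrite -mulrA.
have [Epos|Eneg] := ltP 0 (Eh h u).
  pose X := fun b : bool => if b then Yd u else fdirac ((K + Eh h u) / c).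
  have xc : (K + Eh h u) / c * c = K + Eh h u by rewrite -mulrA mulVf // mulr1.
  apply: (@part1 R h u X hd u01).
  - by case; [exact: vYd | exact: valid_dirac].
  - by rewrite /X /= beta_Yd beta_dirac -/c xc /K; lra.
  - rewrite /Yb /X /= beta_R0Y beta_R0d gx xc /K /gam; move: Epos; rewrite /Eh; lra.
have Eneg' : Eh h u < 0 by rewrite lt_neqAle Eneg andbT.
pose X := fun b : bool => if b then fdirac ((K + Eh h u) / c) else Yd u.
have xc : (K + Eh h u) / c * c = K + Eh h u by rewrite -mulrA mulVf // mulr1.
apply: (@part1 R h u X hd u01).
- by case; [exact: valid_dirac | exact: vYd].
- by rewrite /X /= beta_Yd beta_dirac -/c xc /K; lra.
- rewrite /Yb /X /= beta_R0Y beta_R0d gx xc /K /gam; move: Eneg'; rewrite /Eh; lra.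
Qed.
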